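(* Let $C>0$ and let $(u^k)_{k\ge0}$ be a nonnegative sequence satisfying $u^{k+1}\le-2C+2C\sqrt{1+u^k/C}$ for all $k\ge0$. Then $u^k\le C_2/k$ for all $k\ge1$, where $C_2=\max(8C,\,2\sqrt{C u^0})$. *)

(* Defs.v *)
From Stdlib Require Import Reals.

(* Main.v *)
Require Import Defs.
From Stdlib Require Import Reals Lra Lia Psatz.
Open Scope R_scope.

Lemma div_nonneg (a b : R) : 0 <= a -> 0 < b -> 0 <= a / b.
Proof. intros; unfold Rdiv; apply Rmult_le_pos; [auto| left; apply Rinv_0_lt_compat; auto]. Qed.

Lemma sqrt_le_helper (x y : R) : 0 <= y -> x <= y * y -> sqrt x <= y.
Proof.
  intros Hy Hx. rewrite <- (sqrt_square y) by exact Hy.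
  apply sqrt_le_1_alt; exact Hx.
Qed.

Lemma step_ineq (t K : R) : 8 <= t -> 1 <= K ->
  1 + t / K <= (1 + t / (2 * (K + 1))) * (1 + t / (2 * (K + 1))).
Proof.
  intros Ht HK.
  set (a := t / (2 * (K + 1))).
  assert (Ha : t = a * (2 * (K + 1))) by (unfold a; field; lra).
  assert (Hb : t / K = a * (2 * (K + 1)) / K) by (rewrite Ha; reflexivity).
  rewrite Hb.
  assert (H4 : 4 * (K + 1) <= t * K) by nra.
  assert (Hk : a * (2 * (K + 1)) / K = 2 * a + 2 * a / K) by (field; lra).
  rewrite Hk.
  assert (2 * a / K <= a * a).
  { apply (Rmult_le_reg_r K); [lra|].
    unfold Rdiv. rewrite Rmult_assoc, Rinv_l by lra. rewrite Rmult_1_r.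
    rewrite Ha in H4. nra. }
  nra.
Qed.

Theorem lemma3 (C : R) (u : nat -> R) :
  0 < C ->
  (forall k, 0 <= u k) ->
  (forall k, u (S k) <= -2 * C + 2 * C * sqrt (1 + u k / C)) ->
  forall k : nat, (1 <= k)%nat ->
    u k <= Rmax (8 * C) (2 * sqrt (C * u 0%nat)) / INR k.
Proof.
  intros HC Hu Hrec.
  set (B := Rmax (8 * C) (2 * sqrt (C * u 0%nat))).
  assert (HB1 : 8 * C <= B) by apply Rmax_l.
  assert (HB2 : 2 * sqrt (C * u 0%nat) <= B) by apply Rmax_r.
  induction k as [|k IH]; intros Hk; [lia|].
  destruct k as [|k].
  - simpl INR. rewrite Rdiv_1_r.
    eapply Rle_trans; [apply Hrec|].
    set (s := sqrt (C * u 0%nat)).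
    assert (Hs0 : 0 <= s) by apply sqrt_pos.
    assert (Hss : s * s = C * u 0%nat) by (apply sqrt_sqrt; specialize (Hu 0%nat); nra).
    assert (sqrt (1 + u 0%nat / C) <= 1 + s / C).
    { apply sqrt_le_helper.
      - assert (0 <= s / C) by (apply div_nonneg; lra). lra.
      - assert (u 0%nat / C = (s / C) * (s / C)) by (replace (s / C * (s / C)) with (s * s / (C * C)) by (field; lra); rewrite Hss; field; lra).
        assert (0 <= s / C) by (apply div_nonneg; lra). nra. }
    assert (2 * C * (s / C) = 2 * s) by (field; lra).
    assert (2 * C * sqrt (1 + u 0%nat / C) <= 2 * C * (1 + s / C)) by (apply Rmult_le_compat_l; lra).
    fold s in HB2. lra.
  - specialize (IH ltac:(lia)).
    set (K := INR (S k)) in *.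
    assert (HK : 1 <= K) by (unfold K; rewrite S_INR; pose proof (pos_INR k); lra).
    replace (INR (S (S k))) with (K + 1) by (unfold K; rewrite (S_INR (S k)); reflexivity).
    eapply Rle_trans; [apply Hrec|].
    set (t := B / C).
    assert (Ht : 8 <= t) by (unfold t; apply (Rmult_le_reg_r C); [lra|]; unfold Rdiv; rewrite Rmult_assoc, Rinv_l by lra; lra).
    assert (E1 : sqrt (1 + u (S k) / C) <= sqrt (1 + t / K)).
    { apply sqrt_le_1_alt.
      assert (u (S k) / C <= t / K).
      { unfold t. replace (B / C / K) with (B / K / C) by (field; lra).
        apply Rmult_le_compat_r; [left; apply Rinv_0_lt_compat; lra| exact IH]. }
      lra. }
    assert (E2 : sqrt (1 + t / K) <= 1 + t / (2 * (K + 1))).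
    { apply sqrt_le_helper.
      - assert (0 <= t / (2 * (K + 1))) by (apply div_nonneg; lra). lra.
      - apply step_ineq; lra. }
    assert (E3 : 2 * C * (t / (2 * (K + 1))) = B / (K + 1)) by (unfold t; field; lra).
    assert (2 * C * sqrt (1 + u (S k) / C) <= 2 * C * (1 + t / (2 * (K + 1)))) by (apply Rmult_le_compat_l; lra).
    lra.
Qed.
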